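(* Fix $m\ge1$ and consider the game for SumLoss with top-1 feedback and binary relevance, with loss matrix $L$ as in the context. Then every learner action $\sigma_i$, $i\in[m!]$, is Pareto-optimal.
   Context: Objects are $\{1,\dots,m\}$. Learner actions are the permutations $\sigma_1,\dots,\sigma_{m!}$ of $[m]$ ($\sigma(i)$ = rank of object $i$); adversary actions are the relevance vectors $r_1,\dots,r_{2^m}$ enumerating $\{0,1\}^m$. The loss matrix $L\in\mathbb{R}^{m!\times 2^m}$ has $L_{i,j}=\sum_{k=1}^m\sigma_i(k)r_j(k)$, with rows $\ell_i\in\mathbb{R}^{2^m}$. Let $\Delta=\{p\in\mathbb{R}^{2^m}:p_i\ge0,\sum_ip_i=1\}$. Action $i$ is optimal under $p\in\Delta$ if $\ell_i\cdot p\le\ell_j\cdot p$ for all $j$. The cell of action $i$ is $C_i=\{p\in\Delta: \text{action } i \text{ is optimal under } p\}$. Action $i$ is Pareto-optimal if $C_i$ is non-empty and $(2^m-1)$-dimensional. *)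

(* Defs.v *)
From mathcomp Require Import all_boot all_order all_algebra all_fingroup.
Set Implicit Arguments. Unset Strict Implicit. Unset Printing Implicit Defensive.
Import Order.TTheory GRing.Theory Num.Theory.
Local Open Scope ring_scope.

(* Objects are 'I_m (object k stands for k+1).  Learner actions: permutations
   s : {perm 'I_m}; the rank of object k is (s k).+1 in {1..m}.
   Adversary actions: relevance vectors r : {ffun 'I_m -> bool} (all of {0,1}^m). *)

Definition relv (m : nat) := {ffun 'I_m -> bool}.

Definition sumloss (m : nat) (s : {perm 'I_m}) (r : relv m) : nat :=
  (\sum_(k < m) (s k).+1 * r k)%N.

Definition in_simplex (R : realFieldType) (m : nat) (p : {ffun relv m -> R}) : Prop :=
  (forall r, 0 <= p r) /\ \sum_r p r = 1.

Definition exp_loss (R : realFieldType) (m : nat) (s : {perm 'I_m})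
  (p : {ffun relv m -> R}) : R :=
  \sum_r (sumloss s r)%:R * p r.

Definition cell (R : realFieldType) (m : nat) (s : {perm 'I_m})
  (p : {ffun relv m -> R}) : Prop :=
  in_simplex p /\ forall s' : {perm 'I_m}, exp_loss s p <= exp_loss s' p.

Definition aff_indep (R : realFieldType) (T : finType) (n : nat)
  (P : 'I_n -> {ffun T -> R}) : Prop :=
  forall c : 'I_n -> R,
    \sum_(j < n) c j = 0 ->
    (forall a, \sum_(j < n) c j * P j a = 0) ->
    forall j, c j = 0.

Definition has_affdim (R : realFieldType) (T : finType)
  (S : {ffun T -> R} -> Prop) (d : nat) : Prop :=
  (exists P : 'I_d.+1 -> {ffun T -> R}, (forall j, S (P j)) /\ aff_indep P) /\
  (forall P : 'I_d.+2 -> {ffun T -> R}, (forall j, S (P j)) -> ~ aff_indep P).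

Definition pareto_optimal (R : realFieldType) (m : nat) (s : {perm 'I_m}) : Prop :=
  (exists p, cell (R := R) s p) /\ has_affdim (cell (R := R) s) (2 ^ m - 1).

(* Main.v *)
Require Import Defs.
From mathcomp Require Import all_boot all_order all_algebra all_fingroup.
From mathcomp Require Import ring lra zify.
Set Implicit Arguments. Unset Strict Implicit. Unset Printing Implicit Defensive.
Import Order.TTheory GRing.Theory Num.Theory.
Local Open Scope ring_scope.

Lemma upper (R : realFieldType) (T : finType) (n : nat) (hn : (#|T| < n)%N)
  (P : 'I_n -> {ffun T -> R}) :
  (forall j, \sum_a P j a = 1) -> ~ aff_indep P.
Proof.
move=> Hs Hind.
pose A : 'M[R]_(n, #|T|) := \matrix_(j, a) P j (enum_val a).
have nf : ~~ row_free A.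
  by rewrite /row_free; apply/negP => /eqP E; move: (rank_leq_col A); rewrite E leqNgt hn.
rewrite -kermx_eq0 in nf.
have [i Hi] : exists i, row i (kermx A) != 0.
  apply/existsP; apply: contraR nf; rewrite negb_exists => /forallP H.
  apply/eqP/row_matrixP => i; rewrite row0; exact/eqP/negPn/H.
pose c := fun j => row i (kermx A) 0 j.
have Hc : forall r, \sum_j c j * P j r = 0.
  move=> r; move/(congr1 (fun M => row i M)): (mulmx_ker A) => E.
  rewrite row_mul in E.
  have := congr1 (fun M : 'M[R]_(1,#|T|) => M 0 (enum_rank r)) E; rewrite /= !mxE => E2.
  rewrite -[RHS]E2; apply: eq_bigr => j _; by rewrite /c [A j _]mxE enum_rankK.
have Hsum : \sum_j c j = 0.
  transitivity (\sum_j \sum_r c j * P j r).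
    by apply: eq_bigr => j _; rewrite -mulr_sumr Hs mulr1.
  by rewrite exchange_big /= big1 // => r0 _; rewrite Hc.
have := Hind c Hsum Hc.
move=> H0; move: Hi; apply/negP; rewrite negbK; apply/eqP/rowP => j.
rewrite mxE; have := H0 j; by rewrite /c !mxE.
Qed.
Lemma dpos (R : realFieldType) (x y : nat) (b : bool) :
  0 <= ((x%:R - y%:R) ^+ 2 + (y%:R - x%:R) * b%:R : R).
Proof.
case: b; last by rewrite mulr0 addr0 sqr_ge0.
case: (leqP x y) => h.
  by rewrite mulr1 addr_ge0 ?sqr_ge0 // subr_ge0 ler_nat.
have h' : (y%:R + 1 <= x%:R :> R) by rewrite natr1 ler_nat.
rewrite mulr1; nra.
Qed.

Lemma psum (R : realFieldType) m (s : {perm 'I_m}) (f : nat -> R) :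
  \sum_(k < m) f (s k) = \sum_(k < m) f k.
Proof. by rewrite [RHS](reindex_inj (@perm_inj _ s)). Qed.

Lemma keyR (R : realFieldType) m (s s' : {perm 'I_m}) (r : relv m) :
  \sum_k (2 * ((s k).+1)%:R * (m%:R - (s k)%:R) + ((s k).+1)%:R * (r k)%:R)
  <= \sum_k (2 * ((s' k).+1)%:R * (m%:R - (s k)%:R) + ((s' k).+1)%:R * (r k)%:R) :> R.
Proof.
rewrite -subr_ge0 -sumrB.
have E : forall k : 'I_m,
  (2 * ((s' k).+1)%:R * (m%:R - (s k)%:R) + ((s' k).+1)%:R * (r k)%:R) -
  (2 * ((s k).+1)%:R * (m%:R - (s k)%:R) + ((s k).+1)%:R * (r k)%:R)
  = (((s k)%:R - (s' k)%:R) ^+ 2 + ((s' k)%:R - (s k)%:R) * (r k)%:R)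
    + (2 * m%:R * (s' k)%:R - 2 * m%:R * (s k)%:R)
    + (((s k)%:R ^+ 2 : R) - (s' k)%:R ^+ 2).
  move=> k; rewrite -!natr1; ring.
rewrite (eq_bigr _ (fun k _ => E k)) !big_split /= !sumrN -!mulr_sumr.
rewrite (psum s' (fun k => k%:R)) (psum s (fun k => k%:R)).
rewrite (psum s' (fun k => k%:R ^+ 2)) (psum s (fun k => k%:R ^+ 2)).
rewrite !subrr !addr0 -big_split /=; apply: sumr_ge0 => k _; exact: dpos.
Qed.

Definition pref m (s : {perm 'I_m}) (j : nat) : relv m := [ffun k => (s k < j)%N].

Lemma cnt x n : (\sum_(j < n.+1) ((x < j)%N : nat))%N = (n - x)%N.
Proof.
elim: n => [|n IH]; first by rewrite big_ord_recr big_ord0.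
rewrite big_ord_recr /= IH; case: (ltnP x n.+1) => h /=; lia.
Qed.

Lemma sum_pref m (s s' : {perm 'I_m}) :
  (\sum_(j < m.+1) sumloss s' (pref s j) = \sum_k (s' k).+1 * (m - s k))%N.
Proof.
rewrite /sumloss exchange_big /=; apply: eq_bigr => k _.
under eq_bigr do rewrite ffunE.
by rewrite -big_distrr /= cnt.
Qed.

Lemma Xform (R : realFieldType) m (s s' : {perm 'I_m}) (r : relv m) :
  2 * (\sum_(j < m.+1) sumloss s' (pref s j))%:R + (sumloss s' r)%:R
  = \sum_k (2 * ((s' k).+1)%:R * (m%:R - (s k)%:R) + ((s' k).+1)%:R * (r k)%:R) :> R.
Proof.
rewrite sum_pref /sumloss !natr_sum mulr_sumr -big_split; apply: eq_bigr => k _ /=.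
by rewrite !natrM natrB ?mulrA // ltnW.
Qed.

Definition eps (R : realFieldType) m : R := ((2 * m + 3)%N%:R)^-1.
Definition pt (R : realFieldType) m (s : {perm 'I_m}) (r : relv m) : {ffun relv m -> R} :=
  [ffun r' => eps R m * (2 * \sum_(j < m.+1) (pref s j == r')%:R + (r' == r)%:R)].

Lemma sum_ind (R : realFieldType) (T : finType) (c : T) (F : T -> R) :
  \sum_x F x * (x == c)%:R = F c.
Proof.
rewrite (bigD1 c) //= eqxx mulr1 big1 ?addr0 // => x /negbTE ->; by rewrite mulr0.
Qed.

Lemma eps_gt0 (R : realFieldType) m : 0 < eps R m.
Proof. by rewrite /eps invr_gt0 ltr0n addn3. Qed.

Lemma exp_pt (R : realFieldType) m (s s' : {perm 'I_m}) (r : relv m) :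
  exp_loss s' (pt R s r) =
  eps R m * (2 * (\sum_(j < m.+1) sumloss s' (pref s j))%:R + (sumloss s' r)%:R).
Proof.
rewrite /exp_loss.
have E : forall x : relv m, (sumloss s' x)%:R * pt R s r x =
  eps R m * (2 * (\sum_(j < m.+1) (sumloss s' x)%:R * (x == pref s j)%:R)
             + (sumloss s' x)%:R * (x == r)%:R).
  move=> x; rewrite ffunE.
  rewrite [X in _ = _ * (2 * X + _)](_ : _ = (sumloss s' x)%:R * \sum_(j < m.+1) (pref s j == x)%:R); first ring.
  by rewrite mulr_sumr; apply: eq_bigr => j _; rewrite eq_sym.
rewrite (eq_bigr _ (fun x _ => E x)) -mulr_sumr big_split /= -big_distrr /=.
rewrite exchange_big /= sum_ind natr_sum; congr (_ * (_ * _ + _)).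
by apply: eq_bigr => j _; rewrite sum_ind.
Qed.

Lemma pt_simplex (R : realFieldType) m (s : {perm 'I_m}) (r : relv m) :
  in_simplex (pt R s r).
Proof.
split.
  move=> x; rewrite ffunE mulr_ge0 ?(ltW (eps_gt0 _ _)) //.
  by rewrite addr_ge0 ?mulr_ge0 ?sumr_ge0 // => j _; rewrite ler0n.
under eq_bigr do rewrite ffunE.
rewrite -mulr_sumr big_split /= -big_distrr exchange_big /=.
have -> : \sum_(x : relv m) (x == r)%:R = 1 :> R.
  by rewrite -[RHS](sum_ind r (fun _ => 1:R)); under [RHS]eq_bigr do rewrite mul1r.
have H : forall j, \sum_(x : relv m) (pref s j == x)%:R = 1 :> R.
  by move=> j; rewrite -[RHS](sum_ind (pref s j) (fun _ => 1:R)); under [RHS]eq_bigr do rewrite mul1r; apply: eq_bigr => x _; rewrite eq_sym.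
under eq_bigr do rewrite H.
rewrite sumr_const card_ord /eps.
have -> : 2 * (1 *+ m.+1) + 1 = (2 * m + 3)%N%:R :> R.
  rewrite -mulr_natr mul1r -natr1 natrD natrM; ring.
by rewrite mulVf // pnatr_eq0 addn3.
Qed.

Lemma pt_cell (R : realFieldType) m (s : {perm 'I_m}) (r : relv m) :
  cell s (pt R s r).
Proof.
split; first exact: pt_simplex.
move=> s'; rewrite !exp_pt ler_pM2l ?eps_gt0 // !Xform; exact: keyR.
Qed.

Lemma card_relv m : #|relv m| = (2 ^ m - 1).+1.
Proof. by rewrite card_ffun card_bool card_ord -subSn ?expn_gt0 // subn1. Qed.

Theorem lemma1 (R : realFieldType) (m : nat) (hm : (1 <= m)%N) (s : {perm 'I_m}) :
  pareto_optimal R s.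
Proof.
pose E := esym (card_relv m).
pose rr := fun j : 'I_(2 ^ m - 1).+1 => enum_val (cast_ord E j) : relv m.
have rr_inj : injective rr.
  by move=> i j /enum_val_inj /cast_ord_inj.
split; first by exists (pt R s (rr ord0)); exact: pt_cell.
split.
  exists (fun j => pt R s (rr j)); split => [j|]; first exact: pt_cell.
  move=> c Hc Ha j0.
  have := Ha (rr j0).
  under eq_bigr do rewrite ffunE mulrDr mulrDr.
  rewrite big_split /=.
  have -> : \sum_(i < (2 ^ m - 1).+1) c i * (eps R m * (2 * \sum_(j < m.+1) (pref s j == rr j0)%:R))
      = (\sum_i c i) * (eps R m * (2 * \sum_(j < m.+1) (pref s j == rr j0)%:R)).
    by rewrite mulr_suml.
  rewrite Hc mul0r add0r.
  under eq_bigr do rewrite mulrCA (inj_eq rr_inj) eq_sym.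
  rewrite -mulr_sumr sum_ind => /eqP; rewrite mulf_eq0 => /orP [|/eqP //].
  by rewrite gt_eqF ?eps_gt0.
move=> P HP; apply: (upper (T := relv m)).
  by rewrite card_relv.
by move=> j; case: (HP j) => [[_ ->]].
Qed.
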